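(* Let $(\varphi_k)_{k\ge0}$ be nonnegative weights with $\varphi_0>0$. Let $\mathcal M=\Psi\circ\Phi$ be the map (defined in the context) from increasing diamonds of size $n$ to ordered increasing bucket trees of size $n$ with bucket size $2$. Then for every increasing diamond $F$, the number of inner nodes of $F$ equals the number of nodes of capacity one in $\mathcal M(F)$. Consequently, if $I_n$ denotes the number of inner nodes of a random increasing diamond of size $n$ and $N_n$ the number of capacity-one nodes of a random ordered increasing bucket tree of size $n$ with bucket size 2 (both chosen with probability proportional to weight, with $\psi_1=1$), then $I_n$ and $N_n$ are equal in distribution for every $n\ge1$.
   Context: Increasing diamonds are defined recursively on a finite set $L$ of integer labels: if $|L|=1$ it is a single vertex with that label (weight 1); if $|L|\ge2$ it consists of a source vertex labelled $\min L$, a sink vertex labelled $\max L$, and an ordered sequence $(F_1,\dots,F_r)$, $r\ge0$, of increasing diamonds whose label sets partition $L\setminus\{\min L,\max L\}$, with weight $\varphi_r\prod_i w(F_i)$; size is $|L|$. Node types: if $|L|=1$ its unique vertex is an inner node; otherwise the source is a small node, the sink a large node, and the types of the vertices of $F_1,\dots,F_r$ are assigned recursively. Ordered increasing bucket trees with $b=2$: plane rooted trees whose nodes have capacity 1 or 2 (nodes with children have capacity 2), labels $1,\dots,n$ distributed with each node holding as many labels as its capacity and every label of a node smaller than the labels in its children; weight = product of $\varphi_{d^+(v)}$ over capacity-2 nodes ($d^+(v)$ = number of children), capacity-1 nodes have weight $\psi_1=1$. The map $\mathcal M$: First $\Phi$: if $F$ has one vertex, $\Phi(F)$ is a single bucket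 containing its label; otherwise $\Phi(F)$ has root bucket containing $\min L$ and $\max L$, with ordered subtrees $\Phi(F_1),\dots,\Phi(F_r)$. Then $\Psi$ applied to a bucket-labelled plane tree $\hat T$: if its size is 1, return it; otherwise let $\ell_1<\dots<\ell_n$ be its labels, relabel every label by the permutation fixing $\ell_1$ and mapping $\ell_2\mapsto\ell_3\mapsto\cdots\mapsto\ell_n\mapsto\ell_2$, then keep the root bucket and replace each root subtree $\hat T_i$ (in order) by $\Psi(\hat T_i)$. *)

(* Defs.v *)
From HB Require Import structures.
From mathcomp Require Import all_boot all_order all_algebra.
From mathcomp Require Import boolp classical_sets fsbigop.
Set Implicit Arguments. Unset Strict Implicit. Unset Printing Implicit Defensive.
Import Order.TTheory GRing.Theory Num.Theory.

(*   DLeaf a          : single vertex labelled a (an inner node)       *)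
(*   DNode s t [F_1..F_r] : source labelled s, sink labelled t, and    *)
(*                      the ordered sequence of sub-diamonds F_i.       *)
Inductive diamond := DLeaf of nat | DNode of nat & nat & seq diamond.

Fixpoint dlabels (F : diamond) : seq nat :=
  match F with
  | DLeaf a => [:: a]
  | DNode s t Fs => s :: t :: flatten (map dlabels Fs)
  end.

Fixpoint dwf (F : diamond) : bool :=
  match F with
  | DLeaf _ => true
  | DNode s t Fs =>
      [&& s < t,
          all (fun x => (s < x) && (x < t)) (flatten (map dlabels Fs))
        & all dwf Fs]
  end.

(* F is an increasing diamond (on the label set dlabels F):
   together with uniqueness of labels, the children's label sets
   partition L \ {min L, max L}, source = min L, sink = max L. *)
Definition is_diamond (F : diamond) : bool := uniq (dlabels F) && dwf F.

Fixpoint dweight {R : nzSemiRingType} (phi : nat -> R) (F : diamond) : R :=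
  match F with
  | DLeaf _ => 1%R
  | DNode _ _ Fs => (phi (size Fs) * \prod_(G <- map (dweight phi) Fs) G)%R
  end.

(* number of inner nodes: exactly the vertices of one-vertex sub-diamonds *)
Fixpoint dinner (F : diamond) : nat :=
  match F with
  | DLeaf _ => 1
  | DNode _ _ Fs => sumn (map dinner Fs)
  end.

(* Bucket-labelled plane trees: BNode b [T_1..T_r], b = bucket content *)
(* (its capacity is size b).                                           *)
Inductive btree := BNode of seq nat & seq btree.

Fixpoint blabels (T : btree) : seq nat :=
  match T with BNode b cs => b ++ flatten (map blabels cs) end.

Fixpoint bwf (T : btree) : bool :=
  match T with
  | BNode b cs =>
      [&& (size b == 1) || (size b == 2),
          (~~ nilp cs) ==> (size b == 2),
          sorted ltn b,
          all (fun x => all (fun y => x < y) (flatten (map blabels cs))) b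
        & all bwf cs]
  end.

(* ordered increasing bucket tree with b = 2 (on the label set blabels T);
   a bucket is a set of labels, represented canonically by its increasing list *)
Definition is_btree (T : btree) : bool := uniq (blabels T) && bwf T.

Fixpoint bweight {R : nzSemiRingType} (phi : nat -> R) (T : btree) : R :=
  match T with
  | BNode b cs =>
      ((if size b == 2 then phi (size cs) else 1)
        * \prod_(G <- map (bweight phi) cs) G)%R
  end.

Fixpoint bcap1 (T : btree) : nat :=
  match T with
  | BNode b cs => (size b == 1) + sumn (map bcap1 cs)
  end.

Fixpoint brelabel (f : nat -> nat) (T : btree) : btree :=
  match T with BNode b cs => BNode (map f b) (map (brelabel f) cs) end.

Fixpoint bheight (T : btree) : nat :=
  match T with BNode _ cs => (foldr maxn 0 (map bheight cs)).+1 end.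

(* For ls = [:: l1; l2; ...; ln] (sorted), the permutation fixing l1 and
   mapping l2 -> l3 -> ... -> ln -> l2 (identity off ls). *)
Definition cycperm (ls : seq nat) (x : nat) : nat :=
  match ls with
  | [::] => x
  | _ :: rest => if x \in rest then nth x (rot 1 rest) (index x rest) else x
  end.

Fixpoint Phi (F : diamond) : btree :=
  match F with
  | DLeaf a => BNode [:: a] [::]
  | DNode s t Fs => BNode [:: s; t] (map Phi Fs)
  end.

(* The map Psi, with fuel (bheight T fuel is always enough). *)
Fixpoint Psi_fuel (k : nat) (T : btree) : btree :=
  match k with
  | 0 => T
  | k'.+1 =>
      if size (blabels T) == 1 then T else
      match brelabel (cycperm (sort leq (blabels T))) T with
      | BNode b cs => BNode b (map (Psi_fuel k') cs)
      end
  end.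

Definition Psi (T : btree) : btree := Psi_fuel (bheight T) T.

Definition Mmap (F : diamond) : btree := Psi (Phi F).

Fixpoint denc (F : diamond) : GenTree.tree nat :=
  match F with
  | DLeaf a => GenTree.Leaf a
  | DNode s t Fs => GenTree.Node 0 (GenTree.Leaf s :: GenTree.Leaf t :: map denc Fs)
  end.

Fixpoint ddec (x : GenTree.tree nat) : diamond :=
  match x with
  | GenTree.Leaf a => DLeaf a
  | GenTree.Node _ (GenTree.Leaf s :: GenTree.Leaf t :: ts) => DNode s t (map ddec ts)
  | GenTree.Node _ _ => DLeaf 0
  end.

Fixpoint dencK (F : diamond) : ddec (denc F) = F :=
  match F return ddec (denc F) = F with
  | DLeaf a => erefl
  | DNode s t Fs =>
      f_equal (DNode s t)
        ((fix aux (l : seq diamond) : map ddec (map denc l) = l :=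
            match l return map ddec (map denc l) = l with
            | [::] => erefl
            | G :: l' => f_equal2 cons (dencK G) (aux l')
            end) Fs)
  end.

HB.instance Definition _ := Countable.copy diamond (can_type dencK).

Fixpoint benc (T : btree) : GenTree.tree (seq nat) :=
  match T with
  | BNode b cs => GenTree.Node 0 (GenTree.Leaf b :: map benc cs)
  end.

Fixpoint bdec (x : GenTree.tree (seq nat)) : btree :=
  match x with
  | GenTree.Node _ (GenTree.Leaf b :: ts) => BNode b (map bdec ts)
  | _ => BNode [::] [::]
  end.

Fixpoint bencK (T : btree) : bdec (benc T) = T :=
  match T return bdec (benc T) = T with
  | BNode b cs =>
      f_equal (BNode b)
        ((fix aux (l : seq btree) : map bdec (map benc l) = l :=
            match l return map bdec (map benc l) = l with
            | [::] => erefl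
            | G :: l' => f_equal2 cons (bencK G) (aux l')
            end) cs)
  end.

HB.instance Definition _ := Countable.copy btree (can_type bencK).

Local Open Scope classical_set_scope.
Local Open Scope ring_scope.

Definition diamonds_of_size (n : nat) : set diamond :=
  [set F | is_diamond F /\ perm_eq (dlabels F) (iota 1 n)].

Definition btrees_of_size (n : nat) : set btree :=
  [set T | is_btree T /\ perm_eq (blabels T) (iota 1 n)].

Definition prob_inner {R : realFieldType} (phi : nat -> R) (n k : nat) : R :=
  (\sum_(F \in diamonds_of_size n `&` [set F | dinner F = k]) dweight phi F)
  / (\sum_(F \in diamonds_of_size n) dweight phi F).

Definition prob_cap1 {R : realFieldType} (phi : nat -> R) (n k : nat) : R :=
  (\sum_(T \in btrees_of_size n `&` [set T | bcap1 T = k]) bweight phi T)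
  / (\sum_(T \in btrees_of_size n) bweight phi T).

(* Main.v *)
Require Import Defs.
From mathcomp Require Import all_boot all_order all_algebra.
From mathcomp Require Import boolp classical_sets fsbigop.
From mathcomp Require Import functions.
Import Order.TTheory GRing.Theory Num.Theory.

Section Helpers.
Set Implicit Arguments. Unset Strict Implicit. Unset Printing Implicit Defensive.

Lemma foldr_inP (T : eqType) (P : T -> Prop) (l : seq T) :
  foldr (fun X acc => P X /\ acc) True l -> forall X, X \in l -> P X.
Proof.
elim: l => [|Y l IH] //= [HY Hl] X; rewrite inE => /orP[/eqP->//|]; exact: IH.
Qed.

Definition diamond_ind' (P : diamond -> Prop) (HL : forall a, P (DLeaf a))
  (HN : forall s t Fs, foldr (fun X acc => P X /\ acc) True Fs -> P (DNode s t Fs)) :=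
  fix IH F : P F := match F return P F with
  | DLeaf a => HL a
  | DNode s t Fs => HN s t Fs ((fix aux l : foldr (fun X acc => P X /\ acc) True l :=
       match l with [::] => I | X :: l' => conj (IH X) (aux l') end) Fs)
  end.

Lemma diamond_ind2 (P : diamond -> Prop) : (forall a, P (DLeaf a)) ->
  (forall s t Fs, (forall X, X \in Fs -> P X) -> P (DNode s t Fs)) -> forall F, P F.
Proof. move=> HL HN; apply: diamond_ind' => // s t Fs H; apply: HN; exact: foldr_inP. Qed.

Definition btree_ind' (P : btree -> Prop)
  (HN : forall b cs, foldr (fun X acc => P X /\ acc) True cs -> P (BNode b cs)) :=
  fix IH T : P T := match T return P T with
  | BNode b cs => HN b cs ((fix aux l : foldr (fun X acc => P X /\ acc) True l :=
       match l with [::] => I | X :: l' => conj (IH X) (aux l') end) cs)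
  end.

Lemma btree_ind2 (P : btree -> Prop) :
  (forall b cs, (forall X, X \in cs -> P X) -> P (BNode b cs)) -> forall T, P T.
Proof. move=> HN; apply: btree_ind' => b cs H; apply: HN; exact: foldr_inP. Qed.

Lemma bcap1_relabel f T : bcap1 (brelabel f T) = bcap1 T.
Proof.
elim/btree_ind2: T => b cs IH /=; rewrite size_map; congr (_ + _).
rewrite -map_comp; congr sumn; apply/eq_in_map => X /IH //.
Qed.

Lemma bcap1_Psi k T : bcap1 (Psi_fuel k T) = bcap1 T.
Proof.
elim: k T => [|k IH] T //=; case: ifP => // _.
rewrite -(bcap1_relabel (cycperm (sort leq (blabels T))) T).
case: (brelabel _ T) => b cs /=; congr (_ + _); rewrite -map_comp.
by congr sumn; apply: eq_map => X /=; rewrite IH.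
Qed.

Lemma bcap1_Phi F : bcap1 (Phi F) = dinner F.
Proof.
elim/diamond_ind2: F => // s t Fs IH /=; rewrite -map_comp.
by congr sumn; apply/eq_in_map => X /IH.
Qed.

Lemma part1 F : dinner F = bcap1 (Mmap F).
Proof. by rewrite /Mmap /Psi bcap1_Psi bcap1_Phi. Qed.

Fixpoint drelabel (f : nat -> nat) (F : diamond) : diamond :=
  match F with
  | DLeaf a => DLeaf (f a)
  | DNode s t Fs => DNode (f s) (f t) (map (drelabel f) Fs)
  end.

Definition iso (A B : seq nat) (x : nat) := nth x B (index x A).

Fixpoint Gm (F : diamond) : btree :=
  match F with
  | DLeaf a => BNode [:: a] [::]
  | DNode s t Fs => let M := sort leq (flatten (map dlabels Fs)) in
     BNode [:: s; head t M]
       (map (fun X => brelabel (iso M (behead (rcons M t))) (Gm X)) Fs)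
  end.

Fixpoint Hm (T : btree) : diamond :=
  match T with
  | BNode [:: a] _ => DLeaf a
  | BNode (a :: b :: _) cs => let S := sort leq (flatten (map blabels cs)) in
     DNode a (last b S) (map (fun c => drelabel (iso S (belast b S)) (Hm c)) cs)
  | BNode [::] _ => DLeaf 0
  end.

Lemma dlabels_relabel f F : dlabels (drelabel f F) = map f (dlabels F).
Proof.
elim/diamond_ind2: F => // s t Fs IH /=; rewrite map_flatten -!map_comp.
by congr [:: _, _ & flatten _]; apply/eq_in_map => X /IH.
Qed.

Lemma blabels_relabel f T : blabels (brelabel f T) = map f (blabels T).
Proof.
elim/btree_ind2: T => b cs IH /=; rewrite map_cat map_flatten -!map_comp.
by congr (_ ++ _); congr flatten; apply/eq_in_map => X /IH.
Qed.

Lemma mem_flatten_map (T U : eqType) (g : T -> seq U) l X x :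
  X \in l -> x \in g X -> x \in flatten (map g l).
Proof.
elim: l => [|Y l IH] //=; rewrite inE mem_cat => /orP[/eqP-> ->//|XL xg].
by rewrite IH ?orbT.
Qed.

Lemma drelabel_inv f g F : {in dlabels F, forall x, g (f x) = x} ->
  drelabel g (drelabel f F) = F.
Proof.
elim/diamond_ind2: F => [a|s t Fs IH] /= H; first by rewrite H // mem_head.
rewrite !H ?mem_head ?inE ?eqxx ?orbT //; congr DNode.
rewrite -map_comp -[RHS]map_id; apply/eq_in_map => X XF /=; apply: IH => // x xX.
by apply: H; rewrite !inE (mem_flatten_map XF xX) !orbT.
Qed.

Lemma brelabel_inv f g T : {in blabels T, forall x, g (f x) = x} ->
  brelabel g (brelabel f T) = T.
Proof.
elim/btree_ind2: T => b cs IH /= H; rewrite -map_comp; congr BNode.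
  rewrite -[RHS]map_id; apply/eq_in_map => x xb /=; apply: H; by rewrite mem_cat xb.
rewrite -map_comp -[RHS]map_id; apply/eq_in_map => X XF /=; apply: IH => // x xX.
by apply: H; rewrite mem_cat (mem_flatten_map XF xX) !orbT.
Qed.

Lemma bweight_relabel (R : nzSemiRingType) (phi : nat -> R) f T :
  bweight phi (brelabel f T) = bweight phi T.
Proof.
elim/btree_ind2: T => b cs IH /=; rewrite !size_map -map_comp; congr (_ * _)%R.
by congr (\prod_(G <- _) G)%R; apply/eq_in_map => X /IH.
Qed.

Lemma perm_flatten_map (T U : eqType) (f g : T -> seq U) l :
  (forall X, X \in l -> perm_eq (f X) (g X)) ->
  perm_eq (flatten (map f l)) (flatten (map g l)).
Proof.
elim: l => [|Y l IH] //= H; apply: perm_cat; first by apply: H; rewrite mem_head.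
by apply: IH => X XL; apply: H; rewrite inE XL orbT.
Qed.

Lemma uniq_flatten_map (T U : eqType) (g : T -> seq U) l X :
  uniq (flatten (map g l)) -> X \in l -> uniq (g X).
Proof.
elim: l => [|Y l IH] //=; rewrite cat_uniq => /and3P[uY _ ul].
by rewrite inE => /orP[/eqP->//|]; apply: IH.
Qed.

Lemma iso_map A B : size A = size B -> uniq A -> map (iso A B) A = B.
Proof.
move=> sAB uA; rewrite -[RHS](mkseq_nth 0) -sAB /mkseq.
have -> : iota 0 (size A) = map (index^~ A) A.
  apply: (@eq_from_nth _ 0) => [|i]; rewrite ?size_iota ?size_map // => iA.
  by rewrite nth_iota // (nth_map 0) // index_uniq.
rewrite -map_comp; apply/eq_in_map => x xA /=; rewrite /iso.
by apply: set_nth_default; rewrite -sAB index_mem.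
Qed.

Lemma iso_inv A B x : size A = size B -> uniq B -> x \in A -> iso B A (iso A B x) = x.
Proof.
move=> sAB uB xA; rewrite /iso [nth x B _](set_nth_default 0); last by rewrite -sAB index_mem.
by rewrite index_uniq ?nth_index // -sAB index_mem.
Qed.

Lemma iso_mem A B x : size A = size B -> x \in A -> iso A B x \in B.
Proof. by move=> sAB xA; rewrite /iso mem_nth // -sAB index_mem. Qed.

Lemma iso_mono A B x y : sorted ltn A -> sorted ltn B -> size A = size B ->
  x \in A -> y \in A -> x < y -> iso A B x < iso A B y.
Proof.
move=> sA sB sAB xA yA xy; rewrite /iso.
have iA : index x A < size A by rewrite index_mem.
have jA : index y A < size A by rewrite index_mem.
rewrite (set_nth_default 0 x) -?sAB // (set_nth_default 0 y) -?sAB //.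
have lt : index x A < index y A.
  case: (ltngtP (index x A) (index y A)) => // [ji|e].
    have := sorted_ltn_nth ltn_trans 0 sA; move/(_ (index y A) (index x A) jA iA ji).
    by rewrite !nth_index // => /(ltn_trans xy); rewrite ltnn.
  by move: xy; rewrite -(nth_index 0 xA) -(nth_index 0 yA) e ltnn.
by apply: (sorted_ltn_nth ltn_trans 0 sB); rewrite // inE -sAB.
Qed.

Lemma index_map_in (f : nat -> nat) A x : {in A &, injective f} -> x \in A ->
  index (f x) (map f A) = index x A.
Proof.
elim: A => [|y A IH] //= inj; rewrite inE => /orP[/eqP->|xA]; first by rewrite !eqxx.
case: (eqVneq y x) => [->|yx]; first by rewrite eqxx.
have -> : (f y == f x) = false.
  by apply/negbTE/eqP => /inj; rewrite !inE eqxx xA orbT => /(_ isT isT) /eqP; rewrite (negbTE yx).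
rewrite IH // => u v uA vA; apply: inj; by rewrite inE ?uA ?vA orbT.
Qed.

Lemma iso_comm (f : nat -> nat) A B x : {in A &, injective f} -> size A = size B ->
  x \in A -> iso (map f A) (map f B) (f x) = f (iso A B x).
Proof.
move=> inj sAB xA; rewrite /iso index_map_in //.
by rewrite (nth_map x) // -sAB index_mem.
Qed.

Lemma sorted_cons_lt x l y : sorted ltn (x :: l) -> y \in l -> x < y.
Proof. by move=> /= /(order_path_min ltn_trans) /allP; apply. Qed.

Lemma sorted_rcons_lt l z y : sorted ltn (rcons l z) -> y \in l -> y < z.
Proof.
elim: l => // x l IH /= /[dup] /(order_path_min ltn_trans) /allP Hall /path_sorted Hs.
rewrite inE => /orP[/eqP->|yl]; last exact: IH.
by apply: Hall; rewrite mem_rcons mem_head.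
Qed.

Lemma sorted_rcons_intro l z : sorted ltn l -> all (fun y => y < z) l -> sorted ltn (rcons l z).
Proof.
case: l => // x l sl /allP H; rewrite /= rcons_path.
by rewrite -/(sorted ltn (x :: l)) sl /=; apply: H; exact: mem_last.
Qed.

Lemma rcons_head (M : seq nat) t : rcons M t = head t M :: behead (rcons M t).
Proof. by case: M. Qed.

Lemma sort_sorted_ltn (C : seq nat) : uniq C -> sorted ltn (sort leq C).
Proof. by move=> u; rewrite ltn_sorted_uniq_leq sort_uniq u sort_sorted //; exact: leq_total. Qed.

Lemma Glab F : uniq (dlabels F) -> perm_eq (blabels (Gm F)) (dlabels F).
Proof.
elim/diamond_ind2: F => [a|s t Fs IH] //= U.
set C := flatten (map dlabels Fs); set M := sort leq C; set S0 := behead (rcons M t).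
have uC : uniq C by move: U; rewrite /= => /and3P[].
have E : flatten (map blabels (map (fun X => brelabel (iso M S0) (Gm X)) Fs)) =
   map (iso M S0) (flatten (map (fun X => blabels (Gm X)) Fs)).
  rewrite map_flatten -!map_comp; congr flatten; apply/eq_in_map => X _ /=.
  exact: blabels_relabel.
have P1 : perm_eq (flatten (map (fun X => blabels (Gm X)) Fs)) M.
  rewrite perm_sym perm_sort perm_sym; apply: perm_flatten_map => X XF.
  by apply: IH => //; apply: (uniq_flatten_map uC).
have P2 : perm_eq (map (iso M S0) (flatten (map (fun X => blabels (Gm X)) Fs))) S0.
  rewrite -[X in perm_eq _ X](iso_map (A := M)) ?perm_map // ?sort_uniq //.
  by rewrite /S0 size_behead size_rcons.
rewrite E -/C; apply: (@perm_trans _ (s :: head t M :: S0)).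
  by rewrite perm_cons /= perm_cons.
rewrite perm_cons -rcons_head perm_rcons perm_cons perm_sort.
exact: perm_refl.
Qed.

Lemma Hlab T : bwf T -> uniq (blabels T) -> perm_eq (dlabels (Hm T)) (blabels T).
Proof.
elim/btree_ind2: T => b cs IH.
case: b => [|a [|b0 [|x r]]] //=; first by case: cs IH.
move=> /and4P[_ _ _ /allP wfc] /and3P[_ _ uC].
set C := flatten (map blabels cs); set S := sort leq C; set T2 := belast b0 S.
have E : flatten (map dlabels (map (fun c => drelabel (iso S T2) (Hm c)) cs)) =
   map (iso S T2) (flatten (map (fun c => dlabels (Hm c)) cs)).
  rewrite map_flatten -!map_comp; congr flatten; apply/eq_in_map => X _ /=.
  exact: dlabels_relabel.
have P1 : perm_eq (flatten (map (fun c => dlabels (Hm c)) cs)) S.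
  rewrite perm_sym perm_sort perm_sym; apply: perm_flatten_map => X XF.
  by apply: IH => //; [apply: wfc | apply: (uniq_flatten_map uC)].
have P2 : perm_eq (map (iso S T2) (flatten (map (fun c => dlabels (Hm c)) cs))) T2.
  rewrite -[X in perm_eq _ X](iso_map (A := S)) ?perm_map // ?sort_uniq //.
  by rewrite /T2 size_belast.
rewrite E -/C; apply: (@perm_trans _ (a :: last b0 S :: T2)).
  by rewrite perm_cons /= perm_cons.
rewrite perm_cons /T2 -perm_rcons -lastI perm_cons perm_sort.
exact: perm_refl.
Qed.

Definition incr_on (l : seq nat) (f : nat -> nat) := {in l &, forall x y, x < y -> f x < f y}.

Lemma incr_on_sub l l' f : {subset l' <= l} -> incr_on l f -> incr_on l' f.
Proof. by move=> sub H x y /sub xl /sub yl; apply: H. Qed.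

Lemma bflat_relabel f cs :
  flatten (map blabels (map (brelabel f) cs)) = map f (flatten (map blabels cs)).
Proof.
rewrite map_flatten -!map_comp; congr flatten; apply/eq_in_map => X _ /=.
exact: blabels_relabel.
Qed.

Lemma dflat_relabel f Fs :
  flatten (map dlabels (map (drelabel f) Fs)) = map f (flatten (map dlabels Fs)).
Proof.
rewrite map_flatten -!map_comp; congr flatten; apply/eq_in_map => X _ /=.
exact: dlabels_relabel.
Qed.

Lemma bwf_relabel f T : bwf T -> incr_on (blabels T) f -> bwf (brelabel f T).
Proof.
elim/btree_ind2: T => b cs IH /= /and5P[sb nb sob allb /allP wfc] inc.
rewrite bflat_relabel !size_map.
have -> : nilp (map (brelabel f) cs) = nilp cs by rewrite /nilp size_map.
rewrite sb nb /=; apply/and3P; split.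
- apply: (homo_sorted_in (P := fun x => x \in b ++ flatten (map blabels cs))) sob.
    by move=> x y xb yb; apply: inc.
  by apply/allP => x xb /=; rewrite mem_cat xb.
- apply/allP => _ /mapP[x xb ->]; apply/allP => _ /mapP[y yc ->].
  apply: inc; rewrite ?mem_cat ?xb ?yc ?orbT //.
  by move/allP: allb => /(_ x xb) /allP; apply.
- apply/allP => _ /mapP[X XC ->]; apply: IH => //; first exact: wfc.
  apply: incr_on_sub inc => x xX /=; by rewrite mem_cat (mem_flatten_map XC xX) orbT.
Qed.

Lemma dwf_relabel f F : dwf F -> incr_on (dlabels F) f -> dwf (drelabel f F).
Proof.
elim/diamond_ind2: F => [a|s t Fs IH] //= /and3P[st allF /allP wfc] inc.
rewrite dflat_relabel; apply/and3P; split.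
- by apply: inc; rewrite ?inE ?eqxx ?orbT.
- apply/allP => _ /mapP[x xC ->]; move/allP: allF => /(_ x xC) /andP[sx xt].
  by rewrite !inc ?inE ?eqxx ?xC ?orbT.
- apply/allP => _ /mapP[X XC ->]; apply: IH => //; first exact: wfc.
  apply: incr_on_sub inc => x xX /=; by rewrite !inE (mem_flatten_map XC xX) !orbT.
Qed.

Lemma Gwf F : dwf F -> uniq (dlabels F) -> bwf (Gm F).
Proof.
elim/diamond_ind2: F => [a|s t Fs IH] // /and3P[st /allP allF /allP wfc] U.
set C := flatten (map dlabels Fs).
have uC : uniq C by move: U; rewrite /= => /and3P[].
rewrite [Gm _]/=; set M := sort leq C; set S0 := behead (rcons M t).
set x2 := head t M.
have MC : M =i C by apply: perm_mem; rewrite perm_sort.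
have sN : sorted ltn (x2 :: S0).
  rewrite /x2 /S0 -rcons_head; apply: sorted_rcons_intro; first exact: sort_sorted_ltn.
  by apply/allP => x; rewrite MC => /allF /andP[].
have sM : sorted ltn M by exact: sort_sorted_ltn.
have sS0 : sorted ltn S0 by exact: path_sorted sN.
have szM : size M = size S0 by rewrite /S0 size_behead size_rcons.
have inN : forall y, y \in x2 :: S0 -> s < y.
  move=> y; rewrite /x2 /S0 -rcons_head mem_rcons inE => /orP[/eqP->//|].
  by rewrite MC => /allF /andP[].
have sx2 : s < x2 by apply: inN; rewrite mem_head.
have kidsub : forall X, X \in Fs -> {subset blabels (Gm X) <= M}.
  move=> X XF y; rewrite (perm_mem (Glab (uniq_flatten_map uC XF))) MC.
  exact: mem_flatten_map.
have kidlab : forall y, y \in flatten (map blabels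
     (map (fun X => brelabel (iso M S0) (Gm X)) Fs)) -> y \in S0.
  move=> y /flattenP[l /mapP[K /mapP[X XF ->] ->]].
  rewrite blabels_relabel => /mapP[z zX ->]; exact: iso_mem szM (kidsub X XF z zX).
rewrite /= sx2 /= implybT /= andbT.
apply/andP; split; [apply/andP; split|].
- apply/allP => y /kidlab yS; apply: inN; by rewrite inE yS orbT.
- apply/allP => y /kidlab yS; exact: sorted_cons_lt sN yS.
- apply/allP => _ /mapP[X XF ->]; apply: bwf_relabel.
    by apply: IH => //; [apply: wfc | apply: (uniq_flatten_map uC)].
  move=> x y /(kidsub X XF) xM /(kidsub X XF) yM; exact: iso_mono.
Qed.

Lemma Hwf T : bwf T -> uniq (blabels T) -> dwf (Hm T).
Proof.
elim/btree_ind2: T => b cs IH.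
case: b => [|a [|b0 [|x r]]] //.
move=> /= /and4P[_ /andP[ab _] allb /allP wfc] U.
set C := flatten (map blabels cs).
have uC : uniq C by move: U; rewrite /= => /and3P[].
set S := sort leq C; set T2 := belast b0 S; set z := last b0 S.
have SC : S =i C by apply: perm_mem; rewrite perm_sort.
have aC : forall y, y \in C -> a < y.
  by move=> y yC; move: allb => /and3P[/allP /(_ y yC)].
have bC : forall y, y \in C -> b0 < y.
  by move=> y yC; move: allb => /and3P[_ /allP /(_ y yC)].
have sS : sorted ltn S by exact: sort_sorted_ltn.
have sN : sorted ltn (rcons T2 z).
  rewrite /T2 /z -lastI /= path_min_sorted //; apply/allP => y; rewrite SC; exact: bC.
have sT2 : sorted ltn T2 by exact: (subseq_sorted ltn_trans (subseq_rcons T2 z) sN).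
have szS : size S = size T2 by rewrite /T2 size_belast.
have inN : forall y, y \in rcons T2 z -> a < y.
  move=> y; rewrite /T2 /z -lastI inE => /orP[/eqP->//|]; rewrite SC; exact: aC.
have az : a < z by apply: inN; rewrite mem_rcons mem_head.
have kidsub : forall X, X \in cs -> {subset dlabels (Hm X) <= S}.
  move=> X XF y; rewrite (perm_mem (Hlab (wfc X XF) (uniq_flatten_map uC XF))) SC.
  exact: mem_flatten_map.
have kidlab : forall y, y \in flatten (map dlabels
     (map (fun X => drelabel (iso S T2) (Hm X)) cs)) -> y \in T2.
  move=> y /flattenP[l /mapP[K /mapP[X XF ->] ->]].
  rewrite dlabels_relabel => /mapP[w wX ->]; exact: iso_mem szS (kidsub X XF w wX).
rewrite /= az /=; apply/andP; split.
- apply/allP => y /kidlab yT; rewrite inN ?mem_rcons ?inE ?yT ?orbT //=.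
  exact: sorted_rcons_lt sN yT.
- apply/allP => _ /mapP[X XF ->]; apply: dwf_relabel.
    by apply: IH => //; [apply: wfc | apply: (uniq_flatten_map uC)].
  move=> x y /(kidsub X XF) xM /(kidsub X XF) yM; exact: iso_mono.
Qed.

Lemma drelabel_comp f g F : drelabel g (drelabel f F) = drelabel (g \o f) F.
Proof.
elim/diamond_ind2: F => [a|s t Fs IH] //=; congr DNode; rewrite -map_comp.
by apply/eq_in_map => X /IH.
Qed.

Lemma brelabel_comp f g T : brelabel g (brelabel f T) = brelabel (g \o f) T.
Proof.
elim/btree_ind2: T => b cs IH /=; rewrite -!map_comp; congr BNode.
by apply/eq_in_map => X /IH.
Qed.

Lemma drelabel_eq_in f g F : {in dlabels F, f =1 g} -> drelabel f F = drelabel g F.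
Proof.
elim/diamond_ind2: F => [a|s t Fs IH] /= H; first by rewrite H ?mem_head.
rewrite !H ?mem_head ?inE ?eqxx ?orbT //; congr DNode.
apply/eq_in_map => X XF /=; apply: IH => // x xX.
by apply: H; rewrite !inE (mem_flatten_map XF xX) !orbT.
Qed.

Lemma brelabel_eq_in f g T : {in blabels T, f =1 g} -> brelabel f T = brelabel g T.
Proof.
elim/btree_ind2: T => b cs IH /= H; congr BNode.
  by apply/eq_in_map => x xb; apply: H; rewrite mem_cat xb.
apply/eq_in_map => X XF /=; apply: IH => // x xX.
by apply: H; rewrite mem_cat (mem_flatten_map XF xX) !orbT.
Qed.

Lemma incr_inj l f : incr_on l f -> {in l &, injective f}.
Proof.
move=> H x y xl yl fxy; case: (ltngtP x y) => // [xy|yx].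
  by have := H x y xl yl xy; rewrite fxy ltnn.
by have := H y x yl xl yx; rewrite fxy ltnn.
Qed.

Lemma sort_map_incr l C f : incr_on l f -> {subset C <= l} ->
  sort leq (map f C) = map f (sort leq C).
Proof.
move=> H sub; apply: (homo_sort_map_in (P := fun x => x \in l)).
- move=> x y xl yl /andP[h1 h2]; apply: (incr_inj H) => //.
  by apply/eqP; rewrite eqn_leq; apply/andP; split.
- by move=> y x z _ _ _ /= h1 h2; exact: leq_trans h1 h2.
- by move=> x y _ _; exact: leq_total.
- move=> x y xl yl; rewrite leq_eqVlt => /orP[/eqP->//|xy].
  exact: ltnW (H x y xl yl xy).
- by apply/allP => x /sub.
Qed.

Lemma Gcomm f F : uniq (dlabels F) -> incr_on (dlabels F) f ->
  Gm (drelabel f F) = brelabel f (Gm F).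
Proof.
elim/diamond_ind2: F => [a|s t Fs IH] // U inc.
set C := flatten (map dlabels Fs).
have uC : uniq C by move: U; rewrite /= => /and3P[].
have Csub : {subset C <= dlabels (DNode s t Fs)} by move=> x xC; rewrite !inE xC !orbT.
rewrite /= dflat_relabel -/C (sort_map_incr inc Csub).
set M := sort leq C; set S0 := behead (rcons M t).
have MC : M =i C by apply: perm_mem; rewrite perm_sort.
have -> : head (f t) (map f M) = f (head t M) by case: (M).
rewrite -map_rcons behead_map -/S0 -!map_comp; congr BNode.
apply/eq_in_map => X XF /=.
have uX : uniq (dlabels X) by apply: (uniq_flatten_map uC).
have subX : {subset dlabels X <= dlabels (DNode s t Fs)}.
  by move=> x xX; apply: Csub; exact: mem_flatten_map XF xX.
rewrite IH //; last exact: incr_on_sub inc.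
rewrite !brelabel_comp; apply: brelabel_eq_in => x /=.
rewrite (perm_mem (Glab uX)) => xX.
have xM : x \in M by rewrite MC; exact: mem_flatten_map XF xX.
rewrite iso_comm //; last by rewrite /S0 size_behead size_rcons.
move=> u v /[!MC] uC' vC'; apply: (incr_inj inc); exact: Csub.
Qed.

Lemma Hcomm f T : bwf T -> uniq (blabels T) -> incr_on (blabels T) f ->
  Hm (brelabel f T) = drelabel f (Hm T).
Proof.
elim/btree_ind2: T => b cs IH.
case: b => [|a [|b0 [|x r]]] //.
move=> /= /and4P[_ /andP[ab _] allb /allP wfc] U inc.
set C := flatten (map blabels cs).
have uC : uniq C by move: U; rewrite /= => /and3P[].
have Csub : {subset C <= blabels (BNode [:: a; b0] cs)} by move=> x xC; rewrite /= !inE xC !orbT.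
rewrite bflat_relabel -/C (sort_map_incr inc Csub).
set S := sort leq C; set T2 := belast b0 S.
have SC : S =i C by apply: perm_mem; rewrite perm_sort.
rewrite last_map belast_map -/T2 -!map_comp; congr DNode.
apply/eq_in_map => X XF /=.
have uX : uniq (blabels X) by apply: (uniq_flatten_map uC).
have subX : {subset blabels X <= blabels (BNode [:: a; b0] cs)}.
  by move=> x xX; apply: Csub; exact: mem_flatten_map XF xX.
rewrite IH //; [|exact: wfc|exact: incr_on_sub inc].
rewrite !drelabel_comp; apply: drelabel_eq_in => x /=.
rewrite (perm_mem (Hlab (wfc X XF) uX)) => xX.
have xS : x \in S by rewrite SC; exact: mem_flatten_map XF xX.
rewrite iso_comm //; last by rewrite /T2 size_belast.
move=> u v /[!SC] uC' vC'; apply: (incr_inj inc); exact: Csub.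
Qed.

Lemma cons_rcons (x : nat) l M t : x :: l = rcons M t -> belast x l = M /\ last x l = t.
Proof. by rewrite lastI => /rcons_inj [-> ->]. Qed.

Lemma sort_id_ltn (l C : seq nat) : sorted ltn l -> perm_eq C l -> sort leq C = l.
Proof.
move=> sl pC; apply: (sorted_eq leq_trans anti_leq).
- by apply: sort_sorted; exact: leq_total.
- by move: sl; rewrite ltn_sorted_uniq_leq => /andP[].
- by rewrite perm_sort.
Qed.

Lemma HG F : dwf F -> uniq (dlabels F) -> Hm (Gm F) = F.
Proof.
elim/diamond_ind2: F => [a|s t Fs IH] // /[dup] wfF /and3P[st /allP allF /allP wfc] U.
set C := flatten (map dlabels Fs).
have uC : uniq C by move: U; rewrite /= => /and3P[].
rewrite [Gm _]/=; set M := sort leq C; set S0 := behead (rcons M t).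
set x2 := head t M.
have MC : M =i C by apply: perm_mem; rewrite perm_sort.
have sN : sorted ltn (x2 :: S0).
  rewrite /x2 /S0 -rcons_head; apply: sorted_rcons_intro; first exact: sort_sorted_ltn.
  by apply/allP => x; rewrite MC => /allF /andP[].
have sM : sorted ltn M by exact: sort_sorted_ltn.
have uM : uniq M by rewrite sort_uniq.
have sS0 : sorted ltn S0 by exact: path_sorted sN.
have szM : size M = size S0 by rewrite /S0 size_behead size_rcons.
have kidsub : forall X, X \in Fs -> {subset blabels (Gm X) <= M}.
  move=> X XF y; rewrite (perm_mem (Glab (uniq_flatten_map uC XF))) MC.
  exact: mem_flatten_map.
have P1 : perm_eq (flatten (map (fun X => blabels (Gm X)) Fs)) M.
  rewrite perm_sym perm_sort perm_sym; apply: perm_flatten_map => X XF.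
  by apply: Glab; apply: (uniq_flatten_map uC).
have P2 : perm_eq (flatten (map blabels (map (fun X => brelabel (iso M S0) (Gm X)) Fs))) S0.
  rewrite -map_comp.
  have -> : map (blabels \o (fun X => brelabel (iso M S0) (Gm X))) Fs =
            map (map (iso M S0) \o (fun X => blabels (Gm X))) Fs.
    by apply/eq_in_map => X _ /=; rewrite blabels_relabel.
  rewrite map_comp -map_flatten.
  by rewrite -[X in perm_eq _ X](iso_map szM uM) perm_map.
have [eB eL] : belast x2 S0 = M /\ last x2 S0 = t.
  by apply: cons_rcons; rewrite /x2 /S0 -rcons_head.
rewrite /Hm -/Hm (sort_id_ltn sS0 P2) eB eL; congr DNode.
rewrite -map_comp -[RHS]map_id; apply/eq_in_map => X XF /=.
have uX : uniq (dlabels X) by apply: (uniq_flatten_map uC).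
rewrite Hcomm.
- rewrite IH //; last exact: wfc.
  apply: drelabel_inv => x xX; apply: iso_inv => //.
  by move: sS0; rewrite ltn_sorted_uniq_leq => /andP[].
  by rewrite MC; exact: mem_flatten_map XF xX.
- by apply: Gwf => //; exact: wfc.
- by rewrite (perm_uniq (Glab uX)).
- move=> x y /(kidsub X XF) xM /(kidsub X XF) yM; exact: iso_mono.
Qed.

Lemma rcons_cons (x : nat) l M t : rcons M t = x :: l -> head t M = x /\ behead (rcons M t) = l.
Proof. by rewrite rcons_head => -[-> ->]. Qed.

Lemma GH T : bwf T -> uniq (blabels T) -> Gm (Hm T) = T.
Proof.
elim/btree_ind2: T => b cs IH.
case: b => [|a [|b0 [|x r]]] //; first by case: cs IH.
move=> /= /and4P[_ /andP[ab _] allb /allP wfc] U.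
set C := flatten (map blabels cs).
have uC : uniq C by move: U; rewrite /= => /and3P[].
set S := sort leq C; set T2 := belast b0 S; set z := last b0 S.
have SC : S =i C by apply: perm_mem; rewrite perm_sort.
have bC : forall y, y \in C -> b0 < y.
  by move=> y yC; move: allb => /and3P[_ /allP /(_ y yC)].
have sS : sorted ltn S by exact: sort_sorted_ltn.
have uS : uniq S by rewrite sort_uniq.
have sN : sorted ltn (rcons T2 z).
  rewrite /T2 /z -lastI /= path_min_sorted //; apply/allP => y; rewrite SC; exact: bC.
have sT2 : sorted ltn T2 by exact: (subseq_sorted ltn_trans (subseq_rcons T2 z) sN).
have uT2 : uniq T2 by move: sT2; rewrite ltn_sorted_uniq_leq => /andP[].
have szS : size S = size T2 by rewrite /T2 size_belast.
have kidsub : forall X, X \in cs -> {subset dlabels (Hm X) <= S}.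
  move=> X XF y; rewrite (perm_mem (Hlab (wfc X XF) (uniq_flatten_map uC XF))) SC.
  exact: mem_flatten_map.
have P2 : perm_eq (flatten (map dlabels (map (fun X => drelabel (iso S T2) (Hm X)) cs))) T2.
  rewrite -map_comp.
  have -> : map (dlabels \o (fun X => drelabel (iso S T2) (Hm X))) cs =
            map (map (iso S T2) \o (fun X => dlabels (Hm X))) cs.
    by apply/eq_in_map => X _ /=; rewrite dlabels_relabel.
  rewrite map_comp -map_flatten.
  rewrite -[X in perm_eq _ X](iso_map szS uS) perm_map //.
  rewrite perm_sym perm_sort perm_sym; apply: perm_flatten_map => X XF.
  by apply: Hlab; [apply: wfc | apply: (uniq_flatten_map uC)].
have [eH eB] : head z T2 = b0 /\ behead (rcons T2 z) = S.
  by apply: rcons_cons; rewrite /T2 /z -lastI.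
rewrite /Gm -/Gm (sort_id_ltn sT2 P2) eH eB; congr BNode.
rewrite -map_comp -[RHS]map_id; apply/eq_in_map => X XF /=.
have uX : uniq (blabels X) by apply: (uniq_flatten_map uC).
rewrite Gcomm.
- rewrite IH //; last exact: wfc.
  apply: brelabel_inv => x xX; apply: iso_inv => //.
  by rewrite SC; exact: mem_flatten_map XF xX.
- by rewrite (perm_uniq (Hlab (wfc X XF) uX)).
- move=> x y /(kidsub X XF) xM /(kidsub X XF) yM; exact: iso_mono.
Qed.

Lemma Gweight (R : nzSemiRingType) (phi : nat -> R) F : bweight phi (Gm F) = dweight phi F.
Proof.
elim/diamond_ind2: F => [a|s t Fs IH] /=; first by rewrite big_nil mulr1.
rewrite size_map -map_comp; congr (_ * _)%R.
congr (\prod_(G <- _) G)%R; apply/eq_in_map => X /IH /= <-.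
exact: bweight_relabel.
Qed.

Lemma Gcap F : bcap1 (Gm F) = dinner F.
Proof.
elim/diamond_ind2: F => [a|s t Fs IH] //=; rewrite add0n -map_comp.
by congr sumn; apply/eq_in_map => X /IH /= <-; rewrite bcap1_relabel.
Qed.

Local Open Scope classical_set_scope.

Lemma bijG n (pd : diamond -> Prop) (pb : btree -> Prop) :
  (forall F, pb (Gm F) <-> pd F) ->
  set_bij (diamonds_of_size n `&` pd) (btrees_of_size n `&` pb) Gm.
Proof.
move=> Hp; split.
- move=> F [[/andP[uF wF] pF] dF]; split; last exact/Hp.
  have pG := Glab uF.
  split; last exact: perm_trans pG pF.
  apply/andP; split; first by rewrite (perm_uniq pG).
  exact: Gwf.
- move=> x y /set_mem [[/andP[ux wx] _] _] /set_mem [[/andP[uy wy] _] _] e.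
  by rewrite -(HG wx ux) e HG.
- move=> T [[/andP[uT wT] pT] bT].
  have pH := Hlab wT uT.
  exists (Hm T); last exact: GH.
  split; last by apply/Hp; rewrite GH.
  split; last exact: perm_trans pH pT.
  apply/andP; split; first by rewrite (perm_uniq pH).
  exact: Hwf.
Qed.

Local Open Scope ring_scope.

Lemma part2 (R : realFieldType) (phi : nat -> R) n k :
  prob_inner phi n k = prob_cap1 phi n k.
Proof.
rewrite /prob_inner /prob_cap1.
rewrite (reindex_fsbig Gm (diamonds_of_size n `&` [set F | dinner F = k])); last first.
  by apply: bijG => F /=; rewrite Gcap.
rewrite (reindex_fsbig Gm (diamonds_of_size n)); last first.
  rewrite -[diamonds_of_size n]setIT -[btrees_of_size n]setIT.
  by apply: bijG.
by congr (_ / _); apply: eq_fsbigr => F _; rewrite Gweight.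
Qed.
End Helpers.
Unset Implicit Arguments.

Local Open Scope ring_scope.

Theorem mainTheorem3 (R : realFieldType) (phi : nat -> R)
  (phi_ge0 : forall k, 0 <= phi k) (phi0_gt0 : 0 < phi 0%N) :
  (forall F : diamond, is_diamond F -> dinner F = bcap1 (Mmap F)) /\
  (forall n k : nat, (1 <= n)%N -> prob_inner phi n k = prob_cap1 phi n k).
Proof.
split; first by move=> F _; exact: part1.
by move=> n k _; exact: part2.
Qed.
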